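(* Consider the network-interference setting and the conditional randomization test described in the context, and suppose the null hypothesis $H_0^{\mathrm{sp}}$ holds, i.e. in the outcome model $h\neq0$ and $g=0$. Then $$\mathbb{P}(\mathrm{pval}\le\alpha\mid\mathcal{I})\le\alpha\quad\text{for every }\alpha\in[0,1]\text{ and every }n>0,$$ where the randomness is with respect to the conditional randomization distribution $\mathbb{P}_n^{\mathcal{I}}$.
   Context: Units $i=1,\dots,n$ receive treatments $Z\in\{0,1\}^n$ from a known design $\mathbb{P}_n$. Potential outcomes: $Y_i(z)=\mu+b(X_i)+z_ih(X_i)+g(\mathbf{X},z_{-i})+\epsilon_i$, observed $Y_i=Y_i(Z)$, with covariates $X_i$, covariate matrix $\mathbf{X}$, $z_{-i}$ the vector $z$ without entry $i$, arbitrary functions $b,h,g$, and independent mean-zero noise with $\mathbb{E}(\epsilon_i\mid\mathbf{X})=0$. An adjacency matrix $\mathbf{A}\in\{0,1\}^{n\times n}$ is observed; $A_{i\cdot}$ is its $i$-th row. A set of focal units $\mathcal{I}\subset[n]$ is selected at random. Test: fit, on units $i\in\mathcal{I}$ only, a model $\mathcal{M}_0$ of $Y_i$ on $(Z_i,X_i)$ and a model $\mathcal{M}_1$ of $Y_i$ on $(Z_i,A_{i\cdot}^\top Z,\mathbf{X})$ (any ML models), and set $t_n(Y,Z,\mathbf{X};\mathbf{A})=\mathrm{CV}_{n,k}(\mathcal{M}_0)-\mathrm{CV}_{n,k}(\mathcal{M}_1)$ (difference of $k$-fold cross-validation squared losses). Let $T_n=t_n(Y,Z,\mathbf{X};\mathbf{A})$.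 Let $\mathbb{P}_n^{\mathcal{I}}(z)\propto\mathbb{1}\{z_{\mathcal{I}}=Z_{\mathcal{I}}\}\mathbb{P}_n(z)$, the design conditioned on the focal units' treatments equalling their realized values. Draw $Z^{(r)}$ i.i.d. from $\mathbb{P}_n^{\mathcal{I}}$, $r=1,\dots,R$, compute $t^{(r)}=t_n(Y,Z^{(r)},\mathbf{X};\mathbf{A})$, and set $\mathrm{pval}=\frac1{1+R}[\sum_r\mathbb{1}\{t^{(r)}>T_n\}+U(1+m_R)]$ with $U\sim\mathrm{Unif}[0,1]$ independent and $m_R=\sum_r\mathbb{1}\{t^{(r)}=T_n\}$. *)

(* Defs.v *)
From HB Require Import structures.
From mathcomp Require Import all_boot all_order all_algebra.
From mathcomp Require Import all_classical all_reals all_analysis.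
Set Implicit Arguments. Unset Strict Implicit. Unset Printing Implicit Defensive.
Import Order.TTheory GRing.Theory Num.Theory.
Local Open Scope ring_scope.
Local Open Scope classical_set_scope.

Notation assign n := {ffun 'I_n -> bool}.

Section CRT.
Variables (R : realType) (n : nat) (Tx : Type).

(* Potential outcome
   Y_i(z) = mu + b(X_i) + z_i h(X_i) + g(X, z_{-i}) + eps_i.
   g receives i and the full z, but is required (hypothesis g_only_minus_i
   in the theorem) to depend on z only through z_{-i}. *)
Definition pot_outcome (mu : R) (b h : Tx -> R)
  (g : ('I_n -> Tx) -> 'I_n -> assign n -> R)
  (X : 'I_n -> Tx) (eps : 'I_n -> R) (z : assign n) (i : 'I_n) : R :=
  mu + b (X i) + (z i)%:R * h (X i) + g X i z + eps i.

Definition depends_only_on_minus_i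
  (g : ('I_n -> Tx) -> 'I_n -> assign n -> R) : Prop :=
  forall X i (z z' : assign n), (forall j, j != i -> z j = z' j) ->
    g X i z = g X i z'.

(* An arbitrary (ML) learning procedure with features of type F: it maps a
   training set of (feature, response) pairs to a fitted predictor. *)
Definition learner (F : Type) := seq (F * R) -> F -> R.

Definition CV (F : Type) (k : nat) (fold : 'I_n -> 'I_k) (I : {set 'I_n})
  (L : learner F) (feat : 'I_n -> F) (Y : 'I_n -> R) : R :=
  #|I|%:R^-1 *
  \sum_(m < k) \sum_(i in I | fold i == m)
     (Y i - L [seq (feat j, Y j) | j <- enum I & fold j != m] (feat i)) ^+ 2.

Definition exposure (A : 'I_n -> 'I_n -> bool) (z : assign n) (i : 'I_n) : R :=
  (\sum_(j < n) (A i j && z j))%:R.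

Definition tstat (k : nat) (fold : 'I_n -> 'I_k) (I : {set 'I_n})
  (M0 : learner (bool * Tx)) (M1 : learner (bool * R * ('I_n -> Tx)))
  (A : 'I_n -> 'I_n -> bool) (X : 'I_n -> Tx)
  (Y : 'I_n -> R) (z : assign n) : R :=
  CV fold I M0 (fun i => (z i, X i)) Y
  - CV fold I M1 (fun i => (z i, exposure A z i, X)) Y.

Definition cond_design (P : assign n -> R) (I : {set 'I_n}) (z0 : assign n)
  (z : assign n) : R :=
  (if [forall i in I, z i == z0 i] then P z else 0) /
  \sum_(z' : assign n | [forall i in I, z' i == z0 i]) P z'.

(* Randomized p-value, given observed statistic T, resampled statistics
   t_1..t_Rn and the uniform draw u. *)
Definition pval (Rn : nat) (T : R) (t : 'I_Rn -> R) (u : R) : R :=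
  (1 + Rn%:R)^-1 *
  ((#|[set r | t r > T]|)%:R + u * (1 + (#|[set r | t r == T]|)%:R)).

End CRT.

(* Main.v *)
From Pilot Require Import Defs.
From HB Require Import structures.
From mathcomp Require Import all_boot all_order all_algebra all_fingroup.
From mathcomp Require Import all_classical all_reals all_analysis.
From mathcomp Require Import lra.
Import Order.TTheory GRing.Theory Num.Theory.
Local Open Scope ring_scope.

Module Aux.
Set Implicit Arguments. Unset Strict Implicit. Unset Printing Implicit Defensive.
Local Open Scope ring_scope.

Ltac clamp_cases :=
  repeat (match goal with
  | |- context[Num.max ?a ?b] => case: (leP a b)
  | |- context[Num.min ?a ?b] => case: (leP a b) end); intros; lra.

Section B.
Variable R : realFieldType.
Definition kap (y : R) := Num.max 0 (Num.min 1 y).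

Lemma kap_ge0 y : 0 <= kap y.
Proof. by rewrite /kap le_max lexx. Qed.

Lemma Psi_closed (s : R) b :
  \sum_(m < b) kap (s - m%:R) = Num.max 0 (Num.min b%:R s).
Proof.
elim: b => [|b IH]; first by rewrite big_ord0; clamp_cases.
rewrite big_ord_recr /= IH /kap -natr1.
have : (0:R) <= b%:R by rewrite ler0n.
clamp_cases.
Qed.

Lemma Psi_widen (s : R) b N : (b <= N)%N ->
  Num.max 0 (Num.min b%:R s) =
  \sum_(m < N) (if (m < b)%N then kap (s - m%:R) else 0).
Proof.
move=> bN; rewrite -Psi_closed (big_ord_widen _ (fun m : nat => kap (s - m%:R)) bN).
by rewrite big_mkcond.
Qed.

Variables (N : nat) (x : 'I_N -> R) (s : R).
Definition gtc j := #|[set i | x j < x i]|.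
Definition eqc j := #|[set i | x i == x j]|.
Definition gec j := #|[set i | x j <= x i]|.
Definition phi j := Num.max 0 (Num.min 1 ((s - (gtc j)%:R) / (eqc j)%:R)).

Lemma gt_eqc j : (gtc j + eqc j)%N = gec j.
Proof.
rewrite /gtc /eqc /gec -cardsUI.
have -> : #|[set i | x j < x i] :&: [set i | x i == x j]| = 0%N.
  apply/eqP; rewrite cards_eq0; apply/eqP/finset.setP => i.
  by rewrite !inE; case: (ltgtP (x j) (x i)).
rewrite addn0; apply: eq_card => i; rewrite !inE.
by rewrite le_eqVlt orbC eq_sym.
Qed.

Lemma eqc_gt0 j : (0 < eqc j)%N.
Proof. by apply/card_gt0P; exists j; rewrite inE. Qed.

Lemma gec_le j : (gec j <= N)%N.
Proof. by rewrite /gec; apply: leq_trans (max_card _) _; rewrite card_ord. Qed.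

Lemma phi_sum j : phi j = \sum_(m < N)
  (if (gtc j <= m < gec j)%N then (eqc j)%:R^-1 * kap (s - m%:R) else 0).
Proof.
have c0 : (0:R) < (eqc j)%:R by rewrite ltr0n eqc_gt0.
have -> : phi j = (eqc j)%:R^-1 * Num.max 0 (Num.min (eqc j)%:R (s - (gtc j)%:R)).
  rewrite /phi maxr_pMr ?invr_ge0 ?ltW // mulr0 minr_pMr ?invr_ge0 ?ltW //.
  by rewrite mulVf ?gt_eqF // mulrC.
have -> : Num.max 0 (Num.min (eqc j)%:R (s - (gtc j)%:R)) =
   Num.max 0 (Num.min (gec j)%:R s) - Num.max 0 (Num.min (gtc j)%:R s).
  rewrite -gt_eqc natrD.
  have : (0:R) <= (gtc j)%:R by rewrite ler0n.
  have : (0:R) <= (eqc j)%:R by rewrite ler0n.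
  clamp_cases.
have ale : (gtc j <= N)%N by rewrite (leq_trans _ (gec_le j)) // -gt_eqc leq_addr.
have ab : (gtc j <= gec j)%N by rewrite -gt_eqc leq_addr.
rewrite (Psi_widen _ (gec_le j)) (Psi_widen _ ale) -sumrB mulr_sumr.
apply: eq_bigr => m _.
case: (ltnP m (gtc j)) => h1 /=.
  by rewrite (leq_trans h1 ab) subrr mulr0.
by case: ifP => _; rewrite ?subr0 ?mulr0.
Qed.

Lemma D_le (m : nat) (k : R) : 0 <= k ->
  \sum_(j < N) (if (gtc j <= m < gec j)%N then (eqc j)%:R^-1 * k else 0) <= k.
Proof.
move=> k0; rewrite -big_mkcond /=.
case: (pickP [pred j | (gtc j <= m < gec j)%N]) => [j0 Hj0 | H0]; last first.
  by rewrite big_pred0.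
have key : forall j, (gtc j <= m < gec j)%N -> x j = x j0.
  move=> j Hj; move: Hj0 => /= /andP [a0 b0]; move/andP: Hj => [a1 b1].
  case: (ltgtP (x j) (x j0)) => // h; exfalso.
    have : (gec j0 <= gtc j)%N.
      rewrite /gec /gtc; apply: subset_leq_card; apply/fintype.subsetP => i; rewrite !inE => hi.
      exact: lt_le_trans h hi.
    move=> c; have := leq_trans b0 (leq_trans c a1); by rewrite ltnn.
  have : (gec j <= gtc j0)%N.
    rewrite /gec /gtc; apply: subset_leq_card; apply/fintype.subsetP => i; rewrite !inE => hi.
    exact: lt_le_trans h hi.
  move=> c; have := leq_trans b1 (leq_trans c a0); by rewrite ltnn.
rewrite (eq_bigr (fun _ => (eqc j0)%:R^-1 * k)); last first.
  by move=> j Hj; rewrite /eqc (key j Hj).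
rewrite sumr_const -(mulr_natr ((eqc j0)%:R^-1 * k)).
have c0 : (0:R) < (eqc j0)%:R by rewrite ltr0n eqc_gt0.
have hc : (#|[pred j | (gtc j <= m < gec j)%N]| <= eqc j0)%N.
  rewrite /eqc; apply: subset_leq_card. apply/fintype.subsetP => i Hi; rewrite inE (key i Hi).
  by rewrite eqxx.
rewrite mulrAC; apply: ler_piMl => //.
by rewrite mulrC ler_pdivrMr // mul1r ler_nat; exact: hc.
Qed.

Lemma B_main : 0 <= s -> \sum_(j < N) phi j <= s.
Proof.
move=> s0.
rewrite (eq_bigr _ (fun j _ => phi_sum j)) exchange_big /=.
apply: le_trans (_ : \sum_(m < N) kap (s - m%:R) <= s).
  by apply: ler_sum => m _; apply: D_le; apply: kap_ge0.
rewrite Psi_closed; have : (0:R) <= N%:R by rewrite ler0n.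
clamp_cases.
Qed.
End B.

Lemma phi_ext (R : realFieldType) N (x y : 'I_N -> R) s j :
  x =1 y -> phi x s j = phi y s j.
Proof. by move=> /funext ->. Qed.

Lemma phi_perm (R : realFieldType) N (x : 'I_N -> R) s (σ : {perm 'I_N}) j :
  phi (fun i => x (σ i)) s j = phi x s (σ j).
Proof.
rewrite /phi /gtc /eqc.
have -> : #|[set i | x (σ j) < x (σ i)]| = #|[set i | x (σ j) < x i]|.
  rewrite -[RHS](card_preimset _ (@perm_inj _ σ)); apply: eq_card => i.
  by rewrite !inE.
have -> : #|[set i | x (σ i) == x (σ j)]| = #|[set i | x i == x (σ j)]|.
  rewrite -[RHS](card_preimset _ (@perm_inj _ σ)); apply: eq_card => i.
  by rewrite !inE.
by [].
Qed.

Section C.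
Variables (R : realFieldType) (T : finType) (Rn : nat) (w : T -> R)
  (w_ge0 : forall z, 0 <= w z) (w_sum1 : \sum_z w z = 1) (f : T -> R) (s : R).

Definition Wt (v : {ffun 'I_Rn.+1 -> T}) := \prod_(j < Rn.+1) w (v j).
Definition phiv (v : {ffun 'I_Rn.+1 -> T}) j := phi (fun i => f (v i)) s j.

Lemma phi_sym j : \sum_v Wt v * phiv v ord0 = \sum_v Wt v * phiv v j.
Proof.
pose σ := tperm ord0 j.
pose h := fun v : {ffun 'I_Rn.+1 -> T} => [ffun i => v (σ i)].
have hinj : injective h.
  move=> v1 v2 /ffunP E; apply/ffunP => i; have := E (σ i).
  by rewrite !ffunE tpermK.
rewrite (reindex_inj hinj); apply: eq_bigr => v _.
congr (_ * _).
  by rewrite /Wt [RHS](reindex_inj (@perm_inj _ σ)); apply: eq_bigr => i _; rewrite ffunE.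
rewrite /phiv (@phi_ext _ _ _ (fun i => f (v (σ i)))); last by move=> i; rewrite ffunE.
by have := phi_perm (fun i => f (v i)) s σ ord0; rewrite tpermL.
Qed.

Lemma Wt_ge0 v : 0 <= Wt v.
Proof. by apply: prodr_ge0 => i _. Qed.

Lemma Wt_sum1 : \sum_v Wt v = 1.
Proof.
rewrite /Wt -(bigA_distr_bigA (fun (_ : 'I_Rn.+1) z => w z)) /=.
by rewrite big1 // => i _.
Qed.

Lemma mainC : 0 <= s -> (Rn.+1)%:R * \sum_v Wt v * phiv v ord0 <= s.
Proof.
move=> s0.
have -> : (Rn.+1)%:R * \sum_v Wt v * phiv v ord0 =
          \sum_(j < Rn.+1) \sum_v Wt v * phiv v j.
  rewrite (eq_bigr _ (fun j _ => esym (phi_sym j))) sumr_const card_ord.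
  by rewrite mulr_natl.
rewrite exchange_big /=.
apply: le_trans (_ : \sum_v Wt v * s <= s).
  apply: ler_sum => v _; rewrite -mulr_sumr; apply: ler_wpM2l; first exact: Wt_ge0.
  exact: B_main.
by rewrite -mulr_suml Wt_sum1 mul1r.
Qed.
End C.

Section M.
Local Open Scope classical_set_scope.
Lemma measA (R : realType) (al D a c : R) : 0 < D -> 0 < c ->
  lebesgue_measure (`[0%R, 1%R] `&` [set u : R | D^-1 * (a + u * c) <= al]) =
  (Num.max 0 (Num.min 1 ((al * D - a) / c)))%:E.
Proof.
move=> D0 c0.
set b := Num.min 1 ((al * D - a) / c).
have -> : `[0%R, 1%R] `&` [set u : R | D^-1 * (a + u * c) <= al] = `[0%R, b].
  have key u : (D^-1 * (a + u * c) <= al) = (u <= (al * D - a) / c).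
    rewrite ler_pdivrMl // ler_pdivlMr //.
    by apply/idP/idP => h; lra.
  apply/seteqP; split => u /=; rewrite !in_itv /= key /b le_min.
    by move=> [/andP[-> ->] ->].
  by move=> /andP[-> /andP[-> ->]].
rewrite lebesgue_measure_itv /=.
rewrite lte_fin oppr0 adde0; case: ltP => h.
  by congr EFin; apply/esym/max_idPr/ltW.
by congr EFin; apply/esym/max_idPl.
Qed.
End M.

Lemma card_split Rn (P : pred 'I_Rn.+1) :
  #|[set i | P i]| = (P ord0 + #|[set r : 'I_Rn | P (lift ord0 r)]|)%N.
Proof.
rewrite -!sum1dep_card big_mkcond big_ord_recl /= -big_mkcond /=.
by case: (P ord0).
Qed.

Definition Phi0 (R : realFieldType) Rn (s T : R) (t : 'I_Rn -> R) :=
  Num.max 0 (Num.min 1 ((s - (#|[set r | t r > T]%classic|)%:R) /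
                        (1 + (#|[set r | t r == T]%classic|)%:R))).

Lemma Phi0_phi (R : realFieldType) Rn (x : 'I_Rn.+1 -> R) s :
  Phi0 s (x ord0) (fun r => x (lift ord0 r)) = phi x s ord0.
Proof.
have cl (P : pred 'I_Rn) : #|[set r | P r]%classic| = #|[set r | P r]%SET|.
  apply: eq_card => r; rewrite finset.in_set.
  by apply/idP/idP => [/set_mem //|]; exact: mem_set.
rewrite /Phi0 !cl /phi /gtc /eqc (card_split (fun i => x ord0 < x i)).
rewrite (card_split (fun i => x i == x ord0)) /= ltxx eqxx add0n.
by rewrite natrD.
Qed.

Lemma CV_eqY (R : realType) n (F : Type) k (fold : 'I_n -> 'I_k) (I : {set 'I_n})
  (L : learner R F) (feat : 'I_n -> F) (Y Y' : 'I_n -> R) :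
  (forall i, i \in I -> Y i = Y' i) -> CV fold I L feat Y = CV fold I L feat Y'.
Proof.
move=> HY; rewrite /CV; congr (_ * _); apply: eq_bigr => m _.
apply: eq_bigr => i /andP[iI _]; rewrite HY //; congr ((_ - _) ^+ 2); congr (L _ _).
apply/eq_in_map => j; rewrite mem_filter mem_enum => /andP[_ jI].
by rewrite HY.
Qed.

Lemma tstat_eqY (R : realType) n Tx k (fold : 'I_n -> 'I_k) (I : {set 'I_n})
  (M0 : learner R (bool * Tx)) (M1 : learner R (bool * R * ('I_n -> Tx)))
  A X (Y Y' : 'I_n -> R) z :
  (forall i, i \in I -> Y i = Y' i) ->
  tstat fold I M0 M1 A X Y z = tstat fold I M0 M1 A X Y' z.
Proof. by move=> HY; rewrite /tstat !(CV_eqY _ _ _ HY). Qed.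
End Aux.
Import Aux.
Import Pilot.Defs.
Unset Implicit Arguments.
Local Open Scope ring_scope.
Local Open Scope classical_set_scope.


Theorem theorem3 (R : realType) (n : nat) (Tx : Type)
  (* design *)
  (P : assign n -> R)
  (P_ge0 : forall z, 0 <= P z) (P_sum1 : \sum_(z : assign n) P z = 1)
  (* outcome model *)
  (mu : R) (b h : Tx -> R) (g : ('I_n -> Tx) -> 'I_n -> assign n -> R)
  (X : 'I_n -> Tx) (eps : 'I_n -> R)
  (g_minus_i : depends_only_on_minus_i g)
  (* network, focal units, test statistic, number of resamples *)
  (A : 'I_n -> 'I_n -> bool) (I : {set 'I_n})
  (k : nat) (fold : 'I_n -> 'I_k)
  (M0 : learner R (bool * Tx)) (M1 : learner R (bool * R * ('I_n -> Tx)))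
  (Rn : nat)
  (* realized treatment of the focal units (through z0_I) *)
  (z0 : assign n) (Pz0 : 0 < P z0)
  (alpha : R) :
  (0 < n)%N ->
  (* null hypothesis H0^sp: h <> 0 and g = 0 *)
  (exists x, h x != 0) ->
  (forall X' i z, g X' i z = 0) ->
  0 <= alpha <= 1 ->
  let w := cond_design P I z0 in
  let Yobs := fun z : assign n => pot_outcome mu b h g X eps z in
  let tn := tstat fold I M0 M1 A X in
  ((\sum_(z : assign n) \sum_(zs : {ffun 'I_Rn -> assign n})
     ((w z * \prod_(r < Rn) w (zs r))%:E *
      lebesgue_measure
        (`[0%R, 1%R] `&`
         [set u : R | (pval (tn (Yobs z) z) (fun r => tn (Yobs z) (zs r)) u
                      <= alpha)%R])))%E
  <= alpha%:E)%E.

Proof.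
move=> n0 _ g0 /andP[al0 al1].
cbv zeta.
set w := cond_design P I z0.
set Yobs := fun z => pot_outcome mu b h g X eps z.
set tn := tstat fold I M0 M1 A X.
pose S := \sum_(z' : assign n | [forall i in I, z' i == z0 i]) P z'.
have cz0 : [forall i in I, z0 i == z0 i].
  by apply/forallP => i; apply/implyP => _.
have S0 : 0 < S.
  apply: lt_le_trans Pz0 _; rewrite /S (bigD1 z0) //= lerDl.
  by apply: sumr_ge0 => z _.
have w_ge0 z : 0 <= w z.
  by rewrite /w /cond_design; apply: divr_ge0; [case: ifP | exact: ltW].
have w_sum1 : \sum_z w z = 1.
  rewrite /w /cond_design -mulr_suml -big_mkcond /=.
  by rewrite -/S mulfV // gt_eqF.
have w0 (z : assign n) : ~~ [forall i in I, z i == z0 i] -> w z = 0.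
  by move=> H; rewrite /w /cond_design (negbTE H) mul0r.
pose fv := tn (Yobs z0).
have tnE (z : assign n) : [forall i in I, z i == z0 i] -> tn (Yobs z) = fv.
  move=> /forallP Hz; apply: funext => z'; rewrite /tn /fv.
  apply: tstat_eqY => i iI; rewrite /Yobs /pot_outcome !g0.
  by have := Hz i; rewrite iI /= => /eqP ->.
pose s := alpha * (1 + Rn%:R).
have D0 : (0:R) < 1 + Rn%:R by rewrite nat1r ltr0n.
have Hterm : forall z (zs : {ffun 'I_Rn -> assign n}),
  ((w z * \prod_(r < Rn) w (zs r))%:E *
      lebesgue_measure
        (`[0%R, 1%R] `&`
         [set u : R | (pval (tn (Yobs z) z) (fun r => tn (Yobs z) (zs r)) u
                      <= alpha)%R]))%E =
  (w z * \prod_(r < Rn) w (zs r) * Phi0 s (fv z) (fun r => fv (zs r)))%:E.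
  move=> z zs; case Hz : [forall i in I, z i == z0 i].
    rewrite (tnE z Hz) /pval measA //.
  rewrite w0 ?Hz // !mul0r mul0e.
  done.
under eq_bigr => z _ do under eq_bigr => zs _ do rewrite Hterm.
under eq_bigr => z _ do rewrite sumEFin.
rewrite sumEFin lee_fin.
pose hh : {ffun 'I_Rn.+1 -> assign n} -> assign n * {ffun 'I_Rn -> assign n} :=
  fun v => (v ord0, [ffun r : 'I_Rn => (v (lift ord0 r) : assign n)]).
pose hi : assign n * {ffun 'I_Rn -> assign n} -> {ffun 'I_Rn.+1 -> assign n} :=
  fun p => [ffun i : 'I_Rn.+1 => (if unlift ord0 i is Some r then p.2 r else p.1 : assign n)].
have hbij : bijective hh.
  exists hi.
    move=> v; apply/ffunP => i; rewrite ffunE.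
    by case: unliftP => [r|] -> //=; rewrite ffunE.
  case=> z zs; rewrite /hh /hi /= ffunE unlift_none; congr pair.
  by apply/ffunP => r; rewrite !ffunE liftK.
rewrite pair_big /= (reindex hh); last exact: onW_bij.
have -> : \sum_(v : {ffun 'I_Rn.+1 -> assign n} | true && true)
   (w (hh v).1 * \prod_(r < Rn) w ((hh v).2 r) *
    Phi0 s (fv (hh v).1) (fun r => fv ((hh v).2 r))) =
   \sum_(v : {ffun 'I_Rn.+1 -> assign n}) Wt w v * phiv fv s v (ord0 : 'I_Rn.+1).
  apply: eq_bigr => v _; rewrite /hh /= /Wt big_ord_recl.
  under [X in _ * X * _ = _]eq_bigr => r _ do rewrite ffunE.
  congr (_ * _); rewrite /phiv -Phi0_phi.
  by congr Phi0; apply: funext => r; rewrite ffunE.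
have := @mainC R _ Rn w w_ge0 w_sum1 fv s (mulr_ge0 al0 (ltW D0)).
rewrite -nat1r /s mulrC ler_pM2r //.
Qed.
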